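(* Let $k$ be a positive integer, $a=12k+2$, $S=\{a,a+2,a+\tfrac a2\}$, $G=\langle S\rangle$. Let $A_{0,k}=\{0\}$ and, for $i\in[1,3k]$, $A_{i,k}=[ia,\,ia+2i]_2$ and $B_{i,k}=A_{i-1,k}+\{a+\tfrac a2\}$. For $i\in[3k+1,6k]$ let $D_{i,k}=[ia+\tfrac a2,\,ia+\tfrac a2+2(i-3k)]\cup[ia+\tfrac a2+2(i-3k+1),\,ia+\tfrac a2+6k]_2$. Let $C_{3k+1,k}=[(3k+1)a,(3k+1)a+6k]_2$, $C_{3k+2,k}=[(3k+2)a,(3k+2)a+6k]_2$, and $C_{i,k}=D_{i-2,k}+\{a+\tfrac a2\}$ for $i\in[3k+3,6k+1]$. Let $E=[(6k+1)a+\tfrac a2,\infty[$ and $H_{8,k}=A_{0,k}\cup\bigcup_{i=1}^{3k}(A_{i,k}\cup B_{i,k})\cup\bigcup_{i=3k+1}^{6k+1}C_{i,k}\cup\bigcup_{i=3k+1}^{6k}D_{i,k}\cup E$. Then: (1) $x\in G$ if and only if $x=qa+2r+s(a+\tfrac a2)$ for some $q,r,s\in\mathbb{N}$ with $0\le r\le q$; (2) $G=H_{8,k}$; (3) $A_{i,k}<B_{i,k}$ for $i\in[1,3k]$; $B_{i,k}<A_{i+1,k}$ for $i\in[1,3k-1]$; $B_{3k,k}<C_{3k+1,k}$; $C_{i,k}<D_{i,k}$ for $i\in[3k+1,6k]$; $D_{i,k}<C_{i+1,k}$ for $i\in[3k+1,6k]$; $C_{6k+1,k}<E$; (4) $H_{8,k}$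 is a $3$-permutation numerical semigroup.
   Context: $\mathbb{N}=\{0,1,2,\dots\}$. A numerical semigroup is a submonoid $G$ of $(\mathbb{N},+,0)$ with $\mathbb{N}\setminus G$ finite; $\langle S\rangle$ is the submonoid generated by $S$. Writing the elements of a numerical semigroup as $0=g_0<g_1<g_2<\cdots$, it is an $n$-permutation numerical semigroup if it is generated by $\{g_1,\dots,g_n\}$ and for every $k\in\mathbb{N}$ the tuple $(g_{kn+1}\bmod n,\dots,g_{kn+n}\bmod n)$ contains exactly one representative of each residue class mod $n$. Notation: $[u,v]=\{x\in\mathbb{N}:u\le x\le v\}$, $[u,v]_2=\{x\in[u,v]:x\equiv u\pmod 2\}$, $[u,\infty[=\{x\in\mathbb{N}:x\ge u\}$; $X+Y=\{x+y:x\in X,y\in Y\}$; for nonempty $X,Y$, $X<Y$ means $x<y$ for all $x\in X,y\in Y$. *)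

(* Defs.v *)
From Stdlib Require Import Arith Lia List.

Definition nset := nat -> Prop.

Inductive gen (S : nset) : nset :=
| gen0 : gen S 0
| gen_in : forall x, S x -> gen S x
| gen_add : forall x y, gen S x -> gen S y -> gen S (x + y).

Definition numerical_semigroup (G : nset) : Prop :=
  G 0 /\ (forall x y, G x -> G y -> G (x + y)) /\
  (exists l : list nat, forall x, ~ G x -> In x l).

Definition is_enum (G : nset) (g : nat -> nat) : Prop :=
  (forall i j, i < j -> g i < g j) /\ (forall x, G x <-> exists i, g i = x).

Definition perm_num_semigroup (n : nat) (G : nset) : Prop :=
  numerical_semigroup G /\
  exists g, is_enum G g /\
    (forall x, G x <-> gen (fun y => exists j, 1 <= j <= n /\ y = g j) x) /\
    (forall m c, c < n ->
       exists! j, (1 <= j <= n) /\ g (m * n + j) mod n = c).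

Definition iv (u v : nat) : nset := fun x => u <= x <= v.
Definition iv2 (u v : nat) : nset := fun x => u <= x <= v /\ x mod 2 = u mod 2.
Definition ivinf (u : nat) : nset := fun x => u <= x.
Definition sumset (X Y : nset) : nset := fun z => exists x y, X x /\ Y y /\ z = x + y.
Definition single (a : nat) : nset := fun x => x = a.
Definition union (X Y : nset) : nset := fun x => X x \/ Y x.
Definition setlt (X Y : nset) : Prop :=
  (exists x, X x) /\ (exists y, Y y) /\ (forall x y, X x -> Y y -> x < y).

Definition aa (k : nat) : nat := 12 * k + 2.
Definition ha (k : nat) : nat := aa k / 2.

Definition Gk (k : nat) : nset :=
  gen (fun x => x = aa k \/ x = aa k + 2 \/ x = aa k + ha k).

Definition Aset (k i : nat) : nset :=
  match i with
  | 0 => single 0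
  | _ => iv2 (i * aa k) (i * aa k + 2 * i)
  end.

Definition Bset (k i : nat) : nset := sumset (Aset k (i - 1)) (single (aa k + ha k)).

Definition Dset (k i : nat) : nset :=
  union (iv (i * aa k + ha k) (i * aa k + ha k + 2 * (i - 3 * k)))
        (iv2 (i * aa k + ha k + 2 * (i - 3 * k + 1)) (i * aa k + ha k + 6 * k)).

Definition Cset (k i : nat) : nset :=
  if i =? 3 * k + 1 then iv2 ((3 * k + 1) * aa k) ((3 * k + 1) * aa k + 6 * k)
  else if i =? 3 * k + 2 then iv2 ((3 * k + 2) * aa k) ((3 * k + 2) * aa k + 6 * k)
  else sumset (Dset k (i - 2)) (single (aa k + ha k)).

Definition Eset (k : nat) : nset := ivinf ((6 * k + 1) * aa k + ha k).

Definition H8 (k : nat) : nset := fun x =>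
  Aset k 0 x
  \/ (exists i, 1 <= i <= 3 * k /\ (Aset k i x \/ Bset k i x))
  \/ (exists i, 3 * k + 1 <= i <= 6 * k + 1 /\ Cset k i x)
  \/ (exists i, 3 * k + 1 <= i <= 6 * k /\ Dset k i x)
  \/ Eset k x.

(* Main.v *)
Require Import Defs.
From Stdlib Require Import Arith Lia List Bool ZifyNat.

Definition LM (k i u p : nat) : Prop :=
  (p = 0 /\ u <= i) \/ (p = 1 /\ 3*k <= u /\ u + 1 <= 3*k + i) \/
  (p = 1 /\ u + 3*k + 3 <= i) \/ 6*k+2 <= i \/ (i = 6*k+1 /\ 6*k+1 <= 2*u+p).

Definition scp (k i u p : nat) : nat * nat * nat :=
  if (p =? 1) && (u =? 6*k) then (i+1, 0, 0)
  else if i =? 0 then (1, 0, 0)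
  else if 6*k+2 <=? i then (if p =? 0 then (i,u,1) else (i,u+1,0))
  else if i <=? 3*k then
    (if p =? 0 then (if u <? i then (i,u+1,0) else (i,3*k,1))
     else if u+1 <? 3*k+i then (i,u+1,1) else (i+1,0,0))
  else if 2*u+p+6*k+5 <=? 2*i then (if p =? 0 then (i,u,1) else (i,u+1,0))
  else if p =? 0 then
    (if u <? 3*k then (i,u+1,0) else if u =? 3*k then (i,3*k,1) else (i,u,1))
  else if u <? i then (i,u+1,0) else (i,u+1,1).

Definition Ic (k i u p : nat) : nat :=
  if i =? 0 then 0
  else if 6*k+2 <=? i then (i*(12*k+2) + 2*u + p + (6*k+1)*(6*k+1) + 3*k + 1) - ((6*k+1)*(12*k+2) + 6*k+1)
  else if i <=? 3*k then
    (if p =? 0 then i*i + u else i*i + i + 1 + u - 3*k)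
  else if 2*u+p+6*k+4 <=? 2*i then i*i + 3*k + 2 + 2*u + p - i
  else if 2*u+p <=? 6*k then i*i + u
  else if 2*u+p <=? 2*i+1 then i*i + 2*u + p - 3*k
  else i*i + i + 1 + u - 3*k.

Ltac crush := repeat match goal with
 | |- context [if ?c then _ else _] => destruct c eqn:?
 | H: context [if ?c then _ else _] |- _ => destruct c eqn:?
 | H: (_ && _) = true |- _ => apply andb_prop in H; destruct H
 | H: (_ && _) = false |- _ => apply Bool.andb_false_elim in H; destruct H
 | H: (_ =? _) = true |- _ => apply Nat.eqb_eq in H
 | H: (_ =? _) = false |- _ => apply Nat.eqb_neq in H
 | H: (_ <=? _) = true |- _ => apply Nat.leb_le in H
 | H: (_ <=? _) = false |- _ => apply Nat.leb_gt in H
 | H: (_ <? _) = true |- _ => apply Nat.ltb_lt in H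
 | H: (_ <? _) = false |- _ => apply Nat.ltb_ge in H
 | H: (_, _) = (_, _) |- _ => injection H as; subst
 end.

Section S.
Variable k : nat.
Hypothesis hk : 1 <= k.

Lemma scp_ok i u p i' u' p' : p <= 1 -> 2*u+p < 12*k+2 -> LM k i u p -> scp k i u p = (i', u', p') ->
  p' <= 1 /\ 2*u'+p' < 12*k+2 /\ LM k i' u' p' /\ (i' = i /\ 2*u+p < 2*u'+p' \/ i' = i+1 /\ u' = 0 /\ p' = 0).
Proof.
  intros hp ht hL hs. unfold scp in hs. unfold LM in *. crush; lia.
Qed.

Lemma scp_gap i u p i' u' p' : p <= 1 -> 2*u+p < 12*k+2 -> LM k i u p -> scp k i u p = (i', u', p') ->
  forall uz pz, pz <= 1 -> 2*u+p < 2*uz+pz -> 2*uz+pz < 12*k+2 -> (i' = i -> 2*uz+pz < 2*u'+p') -> ~ LM k i uz pz.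
Proof.
  intros hp ht hL hs. unfold scp in hs. unfold LM in *. crush; lia.
Qed.

Lemma scp_Ic i u p i' u' p' : p <= 1 -> 2*u+p < 12*k+2 -> LM k i u p -> scp k i u p = (i', u', p') ->
  Ic k i' u' p' = Ic k i u p + 1.
Proof.
  intros hp ht hL hs. assert (hii : i <= i*i) by nia.
  assert (hE : 6*k+2 <= i -> (6*k+2)*(12*k+2) <= i*(12*k+2)) by (intro; apply Nat.mul_le_mono_r; lia).
  assert (h61 : i = 6*k+1 -> i*i = (6*k+1)*(6*k+1)) by (intro; subst; lia).
  assert (h62 : i = 6*k+1 -> i*(12*k+2) = (6*k+1)*(12*k+2)) by (intro; subst; lia).
  unfold scp in hs. unfold LM in *. crush; unfold Ic; crush; lia.
Qed.
End S.

Definition inE k i u p := 6*k+2 <= i \/ (i = 6*k+1 /\ 6*k+1 <= 2*u+p).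

Ltac solve_cls := repeat (first [left; solve [repeat split; lia] | right]); repeat split; lia.

Section S.
Variable k : nat.
Hypothesis hk : 1 <= k.

Lemma cls i u p : p <= 1 -> 2*u+p < 12*k+2 -> LM k i u p -> 1 <= i -> ~ inE k i u p ->
  forall i1 u1 p1, scp k i u p = (i1,u1,p1) ->
  (i <= 3*k /\ p = 0 /\ u < i /\ i1 = i /\ u1 = u+1 /\ p1 = 0 /\ Ic k i u p = i*i+u) \/
  (i <= 3*k /\ p = 0 /\ u = i /\ i1 = i /\ u1 = 3*k /\ p1 = 1 /\ Ic k i u p = i*i+u) \/
  (i <= 3*k /\ p = 1 /\ 3*k <= u /\ u+1 < 3*k+i /\ i1 = i /\ u1 = u+1 /\ p1 = 1 /\ Ic k i u p = i*i+i+1+u-3*k) \/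
  (i <= 3*k /\ p = 1 /\ u+1 = 3*k+i /\ i1 = i+1 /\ u1 = 0 /\ p1 = 0 /\ Ic k i u p = i*i+i+1+u-3*k) \/
  (3*k < i /\ i <= 6*k+1 /\ p = 0 /\ 2*u+6*k+5 <= 2*i /\ i1 = i /\ u1 = u /\ p1 = 1 /\ Ic k i u p = i*i+3*k+2+2*u-i) \/
  (3*k < i /\ i <= 6*k+1 /\ p = 1 /\ 2*u+6*k+6 <= 2*i /\ i1 = i /\ u1 = u+1 /\ p1 = 0 /\ Ic k i u p = i*i+3*k+3+2*u-i) \/
  (3*k < i /\ i <= 6*k+1 /\ p = 0 /\ 2*i < 2*u+6*k+5 /\ u < 3*k /\ i1 = i /\ u1 = u+1 /\ p1 = 0 /\ Ic k i u p = i*i+u) \/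
  (3*k < i /\ i <= 6*k+1 /\ p = 0 /\ u = 3*k /\ i1 = i /\ u1 = 3*k /\ p1 = 1 /\ Ic k i u p = i*i+u) \/
  (3*k < i /\ i <= 6*k /\ p = 0 /\ 3*k < u /\ u <= i /\ i1 = i /\ u1 = u /\ p1 = 1 /\ Ic k i u p = i*i+2*u-3*k) \/
  (3*k < i /\ i <= 6*k /\ p = 1 /\ 3*k <= u /\ u < i /\ i1 = i /\ u1 = u+1 /\ p1 = 0 /\ Ic k i u p = i*i+2*u+1-3*k) \/
  (3*k < i /\ i <= 6*k /\ p = 1 /\ i <= u /\ u < 6*k /\ i1 = i /\ u1 = u+1 /\ p1 = 1 /\ Ic k i u p = i*i+i+1+u-3*k) \/
  (3*k < i /\ i <= 6*k /\ p = 1 /\ u = 6*k /\ i1 = i+1 /\ u1 = 0 /\ p1 = 0 /\ Ic k i u p = i*i+i+1+u-3*k).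
Proof.
  intros hp ht hL hi hE i1 u1 p1 hs. assert (hii : i <= i*i) by nia.
  unfold inE in hE. unfold scp in hs; unfold Ic. unfold LM in *. crush; solve_cls.
Qed.
End S.

Section S.
Variable k : nat.
Hypothesis hk : 1 <= k.

Lemma E_step i u p i1 u1 p1 : inE k i u p -> p <= 1 -> 2*u+p < 12*k+2 -> scp k i u p = (i1,u1,p1) ->
  i1*(12*k+2)+2*u1+p1 = i*(12*k+2)+2*u+p + 1 /\ inE k i1 u1 p1 /\ p1 <= 1 /\ 2*u1+p1 < 12*k+2.
Proof.
  intros hE hp ht hs. unfold inE in *. unfold scp in hs. crush; lia.
Qed.

Lemma sq3 i : (i mod 3 = 0 -> (i*i) mod 3 = 0) /\ (i mod 3 <> 0 -> (i*i) mod 3 = 1).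
Proof.
  assert (exists j e, i = 3*j+e /\ e < 3) as [j [e [-> he]]] by (exists (i/3), (i mod 3); split; [apply Nat.div_mod; lia | apply Nat.mod_upper_bound; lia]).
  destruct e as [|[|[|e]]]; lia.
Qed.

Lemma valmod i u p : (i*(12*k+2)+2*u+p) mod 3 = (2*i+2*u+p) mod 3.
Proof. lia. Qed.

Lemma scp_res i u p i1 u1 p1 i2 u2 p2 : p <= 1 -> 2*u+p < 12*k+2 -> LM k i u p ->
  (Ic k i u p) mod 3 = 1 ->
  scp k i u p = (i1, u1, p1) -> scp k i1 u1 p1 = (i2, u2, p2) ->
  let X := i*(12*k+2) + 2*u+p in let Y := i1*(12*k+2)+2*u1+p1 in let Z := i2*(12*k+2)+2*u2+p2 in
  X mod 3 <> Y mod 3 /\ Y mod 3 <> Z mod 3 /\ X mod 3 <> Z mod 3.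
Proof.
  intros hp ht hL hI h1 h2 X Y Z. subst X Y Z.
  destruct (scp_ok k hk i u p i1 u1 p1 hp ht hL h1) as (hp1 & ht1 & hL1 & _).
  assert (hEd : inE k i u p \/ ~ inE k i u p) by (unfold inE; lia).
  destruct hEd as [hE|hE].
  { destruct (E_step _ _ _ _ _ _ hE hp ht h1) as (e1 & hE1 & _).
    destruct (E_step _ _ _ _ _ _ hE1 hp1 ht1 h2) as (e2 & _). lia. }
  assert (hi : 1 <= i).
  { destruct i; [|lia]. exfalso. unfold LM in hL. unfold Ic in hI. simpl in hI. lia. }
  pose proof (sq3 i) as hsq.
  pose proof (cls k hk i u p hp ht hL hi hE i1 u1 p1 h1) as hc.
  assert (hEd : inE k i1 u1 p1 \/ ~ inE k i1 u1 p1) by (unfold inE; lia).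
  destruct hEd as [hE1|hE1].
  { destruct (E_step _ _ _ _ _ _ hE1 hp1 ht1 h2) as (e2 & _).
    clear h1 h2 hL hL1; unfold inE in *; decompose [and or] hc; clear hc; subst; lia. }
  assert (hi1 : 1 <= i1) by (decompose [and or] hc; lia).
  pose proof (cls k hk i1 u1 p1 hp1 ht1 hL1 hi1 hE1 i2 u2 p2 h2) as hc2.
  clear h1 h2 hL hL1. unfold inE in *. rewrite !valmod.
  decompose [and or] hc; clear hc; subst;
  decompose [and or] hc2; clear hc2; subst; solve [exfalso; clear hI hsq; lia | lia].
Qed.
End S.

Lemma hdiv k : ha k = 6*k+1.
Proof. unfold ha, aa. lia. Qed.

Definition Rep k x := exists q r s, r <= q /\ x = q * aa k + 2 * r + s * (aa k + ha k).

Lemma gen_mul S y n : S y -> gen S (n*y).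
Proof.
  intro H. induction n as [|n IH]; simpl. apply gen0.
  apply gen_add; [apply gen_in; exact H | exact IH].
Qed.

Lemma gen_ext (S T : nset) x : (forall y, S y -> T y) -> gen S x -> gen T x.
Proof.
  intros HST H. induction H. apply gen0. apply gen_in; auto. apply gen_add; auto.
Qed.

Lemma Gk_Rep k x : Gk k x <-> Rep k x.
Proof.
  unfold Rep, Gk. rewrite hdiv. unfold aa. split.
  - intro H. induction H as [|x Hx|x y _ [q [r [s [h1 h2]]]] _ [q' [r' [s' [h1' h2']]]]].
    + exists 0, 0, 0. lia.
    + destruct Hx as [->|[->| ->]].
      * exists 1, 0, 0. lia.
      * exists 1, 1, 0. lia.
      * exists 0, 0, 1. lia.
    + exists (q+q'), (r+r'), (s+s'). subst. lia.
  - intros [q [r [s [h1 ->]]]].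
    replace (q * (12 * k + 2) + 2 * r + s * (12 * k + 2 + (6 * k + 1)))
      with ((q - r) * (12*k+2) + r * (12*k+2+2) + s * (12 * k + 2 + (6 * k + 1))).
    2:{ assert (exists d, q = r + d) as [d ->] by (exists (q-r); lia). lia. }
    apply gen_add; [apply gen_add|]; apply gen_mul; tauto.
Qed.

Definition Lay k x := exists i u p, p <= 1 /\ 2*u+p < 12*k+2 /\ x = i*(12*k+2)+2*u+p /\ LM k i u p.

Lemma dec_ex k x : exists i u p, p <= 1 /\ 2*u+p < 12*k+2 /\ x = i*(12*k+2)+2*u+p.
Proof.
  exists (x / (12*k+2)), ((x mod (12*k+2))/2), ((x mod (12*k+2)) mod 2).
  pose proof (Nat.div_mod x (12*k+2) ltac:(lia)).
  pose proof (Nat.mod_upper_bound x (12*k+2) ltac:(lia)).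
  set (t := x mod (12*k+2)) in *. set (q := x / (12*k+2)) in *. clearbody t q. lia.
Qed.

Lemma mul_lt_inv i j a : i*a < j*a -> i < j.
Proof. intros H. destruct (Nat.lt_ge_cases i j); auto. assert (j*a <= i*a) by (apply Nat.mul_le_mono_r; lia). lia. Qed.

Lemma layer_uniq k i u p i' u' p' : p <= 1 -> 2*u+p < 12*k+2 -> p' <= 1 -> 2*u'+p' < 12*k+2 ->
  i*(12*k+2)+2*u+p = i'*(12*k+2)+2*u'+p' -> i = i' /\ u = u' /\ p = p'.
Proof.
  intros. assert (i = i').
  { destruct (Nat.lt_total i i') as [hl|[he|hl]]; auto.
    - assert ((i+1)*(12*k+2) <= i'*(12*k+2)) by (apply Nat.mul_le_mono_r; lia). lia.
    - assert ((i'+1)*(12*k+2) <= i*(12*k+2)) by (apply Nat.mul_le_mono_r; lia). lia. }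
  subst. lia.
Qed.

Lemma layer_of k i z : i*(12*k+2) <= z -> z < (i+1)*(12*k+2) ->
  forall iz uz pz, pz <= 1 -> 2*uz+pz < 12*k+2 -> z = iz*(12*k+2)+2*uz+pz -> iz = i.
Proof.
  intros h1 h2 iz uz pz hp ht ->.
  destruct (Nat.lt_total iz i) as [hl|[he|hl]]; auto.
  - assert ((iz+1)*(12*k+2) <= i*(12*k+2)) by (apply Nat.mul_le_mono_r; lia). lia.
  - assert ((i+1)*(12*k+2) <= iz*(12*k+2)) by (apply Nat.mul_le_mono_r; lia). lia.
Qed.

Section S.
Variable k : nat.
Hypothesis hk : 1 <= k.

Lemma LM_red i u p : p <= 1 -> 2*u+p < 12*k+2 -> LM k i u p ->
  (p = 0 /\ u <= i) \/ (p = 1 /\ 3*k <= u /\ u + 1 <= 3*k + i) \/ (p = 1 /\ u + 3*k + 3 <= i).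
Proof. unfold LM. lia. Qed.

Lemma Lay_Rep x : Lay k x -> Rep k x.
Proof.
  intros (i & u & p & hp & ht & -> & hL). unfold Rep. rewrite hdiv. unfold aa.
  destruct (LM_red i u p hp ht hL) as [[h1 h2]|[[h1 [h2 h3]]|[h1 h2]]]; subst p.
  - exists i, u, 0. lia.
  - assert (exists j, i = j+1) as [j ->] by (exists (i-1); lia).
    exists j, (u-3*k), 1. lia.
  - assert (exists j, i = j+2) as [j ->] by (exists (i-2); lia).
    exists j, (u+3*k+1), 1. lia.
Qed.

Lemma Rep_Lay x : Rep k x -> Lay k x.
Proof.
  intros (q & r & s & hrq & hx). rewrite hdiv in hx. unfold aa in hx. unfold Lay.
  destruct (le_lt_dec ((6*k+2)*(12*k+2)) x) as [hb|hb].
  - destruct (dec_ex k x) as (i & u & p & hp & ht & hxe). exists i, u, p. repeat split; auto.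
    unfold LM. right; right; right; left.
    destruct (le_lt_dec (6*k+2) i) as [|hi]; auto.
    assert (i*(12*k+2) <= (6*k+1)*(12*k+2)) by (apply Nat.mul_le_mono_r; lia). lia.
  - assert (exists s' s0, s = 2*s' + s0 /\ s0 <= 1) as (s' & s0 & -> & hs0)
      by (exists (s/2), (s mod 2); lia).
    assert (hx' : x = (q + 3*s')*(12*k+2) + 2*r + s0*(12*k+2+(6*k+1))) by lia.
    assert (hrq' : r <= q + 3*s') by lia. clear hx.
    revert hx' hrq'. generalize (q + 3*s'). intros q' hx' hrq'. clear q hrq.
    assert (hq : q' <= 6*k+1).
    { destruct (le_lt_dec q' (6*k+1)); auto.
      assert ((6*k+2)*(12*k+2) <= q'*(12*k+2)) by (apply Nat.mul_le_mono_r; lia). lia. }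
    assert (h61 : q' = 6*k+1 -> q'*(12*k+2) = (6*k+1)*(12*k+2)) by (intro; subst; lia).
    destruct s0 as [|[|]]; [| |lia].
    + exists q', r, 0. unfold LM. lia.
    + destruct (le_lt_dec r (3*k)).
      * exists (q'+1), (3*k+r), 1. unfold LM. lia.
      * exists (q'+2), (r-3*k-1), 1. unfold LM. lia.
Qed.
End S.

Lemma Aset_S k i : 1 <= i -> Aset k i = iv2 (i * aa k) (i * aa k + 2 * i).
Proof. destruct i; [lia|reflexivity]. Qed.

Lemma Cset_1 k : Cset k (3*k+1) = iv2 ((3 * k + 1) * aa k) ((3 * k + 1) * aa k + 6 * k).
Proof. unfold Cset. rewrite Nat.eqb_refl. reflexivity. Qed.

Lemma Cset_2 k : Cset k (3*k+2) = iv2 ((3 * k + 2) * aa k) ((3 * k + 2) * aa k + 6 * k).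
Proof. unfold Cset. destruct (Nat.eqb_spec (3*k+2) (3*k+1)); [lia|]. rewrite Nat.eqb_refl. reflexivity. Qed.

Lemma Cset_o k i : i <> 3*k+1 -> i <> 3*k+2 -> Cset k i = sumset (Dset k (i - 2)) (single (aa k + ha k)).
Proof. intros. unfold Cset. destruct (Nat.eqb_spec i (3*k+1)); [lia|]. destruct (Nat.eqb_spec i (3*k+2)); [lia|]. reflexivity. Qed.

Section S.
Variable k : nat.
Hypothesis hk : 1 <= k.

Ltac norm := unfold iv2, iv, ivinf, sumset, single, union in *; rewrite ?hdiv in *; unfold aa in *.

Lemma H8_Lay x : H8 k x -> Lay k x.
Proof.
  unfold Lay.
  intros [HA | [(i & hi & [HA|HB]) | [(i & hi & HC) | [(i & hi & HD) | HE]]]].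
  - unfold Aset, single in HA. subst. exists 0, 0, 0. unfold LM. lia.
  - rewrite Aset_S in HA by lia. norm.
    exists i, ((x - i*(12*k+2))/2), 0. unfold LM. lia.
  - unfold Bset in HB. norm. destruct HB as (y & z & Hy & -> & ->).
    destruct (Nat.eq_dec i 1) as [->|hi1].
    + simpl in Hy. unfold single in Hy. subst. exists 1, (3*k), 1. unfold LM. lia.
    + rewrite Aset_S in Hy by lia. norm.
      assert (exists j, i = j+2) as [j ->] by (exists (i-2); lia).
      replace (j+2-1) with (j+1) in Hy by lia.
      exists (j+2), (3*k + (y - (j+1)*(12*k+2))/2), 1. unfold LM. lia.
  - destruct (Nat.eq_dec i (3*k+1)) as [->|h1].
    { rewrite Cset_1 in HC. norm. exists (3*k+1), ((x - (3*k+1)*(12*k+2))/2), 0. unfold LM. lia. }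
    destruct (Nat.eq_dec i (3*k+2)) as [->|h2].
    { rewrite Cset_2 in HC. norm. exists (3*k+2), ((x - (3*k+2)*(12*k+2))/2), 0. unfold LM. lia. }
    rewrite Cset_o in HC by lia. unfold Dset in HC. norm.
    assert (exists j, i = j+2) as [j ->] by (exists (i-2); lia).
    replace (j+2-2) with j in HC by lia.
    destruct HC as (y & z & Hy & -> & ->).
    exists (j+2), ((y - j*(12*k+2) - (6*k+1))/2), ((y - j*(12*k+2) - (6*k+1)) mod 2). unfold LM. lia.
  - unfold Dset in HD. norm.
    exists i, ((x - i*(12*k+2))/2), ((x - i*(12*k+2)) mod 2). unfold LM. lia.
  - unfold Eset in HE. norm.
    destruct (dec_ex k x) as (i & u & p & hp & ht & hxe). exists i, u, p. repeat split; auto.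
    unfold LM. right; right; right.
    destruct (le_lt_dec (6*k+2) i) as [|hi]; [left; auto|right].
    assert (i <= 6*k -> i*(12*k+2) <= (6*k)*(12*k+2)) by (intro; apply Nat.mul_le_mono_r; lia).
    assert (i = 6*k+1 -> i*(12*k+2) = (6*k+1)*(12*k+2)) by (intro; subst; lia).
    lia.
Qed.
End S.

Section S.
Variable k : nat.
Hypothesis hk : 1 <= k.

Ltac norm := unfold iv2, iv, ivinf, sumset, single, union in *; rewrite ?hdiv in *; unfold aa in *.

Lemma Lay_H8 x : Lay k x -> H8 k x.
Proof.
  intros (i & u & p & hp & ht & -> & hL). unfold H8.
  destruct (Nat.eq_dec i 0) as [->|hi0].
  { left. unfold Aset, single. unfold LM in hL. lia. }
  destruct (le_lt_dec i (3*k)) as [hi|hi].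
  { right; left. exists i. split; [lia|].
    destruct (LM_red k hk i u p hp ht hL) as [[h1 h2]|[[h1 [h2 h3]]|[h1 h2]]]; [left| right |lia].
    - rewrite Aset_S by lia. norm. lia.
    - unfold Bset. norm.
      assert (exists j, i = j+1) as [j ->] by (exists (i-1); lia).
      replace (j+1-1) with j by lia.
      exists (j*(12*k+2) + 2*(u-3*k)), (12*k+2+(6*k+1)).
      split; [|lia].
      destruct (Nat.eq_dec j 0) as [->|hi1].
      + simpl. unfold single. lia.
      + rewrite Aset_S by lia. norm. lia. }
  destruct (le_lt_dec (6*k+2) i) as [hi2|hi2].
  { right; right; right; right. unfold Eset. norm.
    assert ((6*k+2)*(12*k+2) <= i*(12*k+2)) by (apply Nat.mul_le_mono_r; lia). lia. }
  assert (h61 : i = 6*k+1 -> i*(12*k+2) = (6*k+1)*(12*k+2)) by (intro; subst; lia).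
  destruct (le_lt_dec (6*k+1) (2*u+p)) as [ht2|ht2].
  { destruct (Nat.eq_dec i (6*k+1)) as [->|hi3].
    - right; right; right; right. unfold Eset. norm. lia.
    -
      right; right; right; left. exists i. split; [lia|].
      unfold Dset. norm. unfold LM in hL. lia. }
  right; right; left. exists i. split; [lia|].
  destruct (Nat.eq_dec i (3*k+1)) as [->|h1].
  { rewrite Cset_1. norm. unfold LM in hL. lia. }
  destruct (Nat.eq_dec i (3*k+2)) as [->|h2].
  { rewrite Cset_2. norm. unfold LM in hL. lia. }
  rewrite Cset_o by lia. unfold Dset. norm.
  assert (exists j, i = j+2) as [j ->] by (exists (i-2); lia).
  replace (j+2-2) with j by lia.
  exists (j*(12*k+2) + (6*k+1) + 2*u+p), (12*k+2+(6*k+1)). unfold LM in hL. lia.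
Qed.

Lemma Gk_H8 x : Gk k x <-> H8 k x.
Proof.
  rewrite Gk_Rep. split.
  - intro. apply Lay_H8. apply Rep_Lay; auto.
  - intro. apply Lay_Rep; auto. apply H8_Lay; auto.
Qed.
End S.

Section S.
Variable k : nat.
Hypothesis hk : 1 <= k.

Ltac norm := unfold iv2, iv, ivinf, sumset, single, union in *; rewrite ?hdiv in *; unfold aa in *.

Lemma A_b i x : 1 <= i -> Aset k i x -> i*(12*k+2) <= x <= i*(12*k+2) + 2*i.
Proof. intros hi H. rewrite Aset_S in H by lia. norm. lia. Qed.
Lemma A_w i : 1 <= i -> Aset k i (i*(12*k+2)).
Proof. intros hi. rewrite Aset_S by lia. norm. lia. Qed.

Lemma B_b i x : 1 <= i -> Bset k i x -> i*(12*k+2) + 6*k+1 <= x <= i*(12*k+2) + 6*k+1 + 2*(i-1).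
Proof.
  intros hi H. unfold Bset in H. norm. destruct H as (y & z & Hy & -> & ->).
  assert (exists j, i = j+1) as [j ->] by (exists (i-1); lia).
  replace (j+1-1) with j in Hy by lia.
  destruct (Nat.eq_dec j 0) as [->|hj].
  - simpl in Hy. unfold single in Hy. lia.
  - apply A_b in Hy; lia.
Qed.
Lemma B_w i : 1 <= i -> Bset k i (i*(12*k+2) + 6*k+1).
Proof.
  intros hi. unfold Bset. norm.
  assert (exists j, i = j+1) as [j ->] by (exists (i-1); lia).
  replace (j+1-1) with j by lia.
  exists (j*(12*k+2)), (12*k+2+(6*k+1)). split; [|lia].
  destruct (Nat.eq_dec j 0) as [->|hj].
  - simpl. unfold single. lia.
  - apply A_w; lia.
Qed.

Lemma D_b i x : 3*k+1 <= i <= 6*k -> Dset k i x -> i*(12*k+2) + 6*k+1 <= x <= i*(12*k+2) + 6*k+1 + 6*k.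
Proof. intros hi H. unfold Dset in H. norm. lia. Qed.
Lemma D_w i : 3*k+1 <= i <= 6*k -> Dset k i (i*(12*k+2) + 6*k+1).
Proof. intros hi. unfold Dset. norm. lia. Qed.

Lemma C_b i x : 3*k+1 <= i <= 6*k+1 -> Cset k i x -> i*(12*k+2) <= x <= i*(12*k+2) + 6*k.
Proof.
  intros hi H.
  destruct (Nat.eq_dec i (3*k+1)) as [->|h1]. { rewrite Cset_1 in H. norm. lia. }
  destruct (Nat.eq_dec i (3*k+2)) as [->|h2]. { rewrite Cset_2 in H. norm. lia. }
  rewrite Cset_o in H by lia. unfold Dset in H. norm.
  assert (exists j, i = j+2) as [j ->] by (exists (i-2); lia).
  replace (j+2-2) with j in H by lia. destruct H as (y & z & Hy & -> & ->). lia.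
Qed.
Lemma C_w i : 3*k+1 <= i <= 6*k+1 -> Cset k i (i*(12*k+2)).
Proof.
  intros hi.
  destruct (Nat.eq_dec i (3*k+1)) as [->|h1]. { rewrite Cset_1. norm. lia. }
  destruct (Nat.eq_dec i (3*k+2)) as [->|h2]. { rewrite Cset_2. norm. lia. }
  rewrite Cset_o by lia. unfold Dset. norm.
  assert (exists j, i = j+2) as [j ->] by (exists (i-2); lia).
  replace (j+2-2) with j by lia.
  exists (j*(12*k+2) + (6*k+1)), (12*k+2+(6*k+1)). lia.
Qed.

Lemma E_b x : Eset k x -> (6*k+1)*(12*k+2) + 6*k+1 <= x.
Proof. unfold Eset. norm. lia. Qed.
Lemma E_w : Eset k ((6*k+1)*(12*k+2) + 6*k+1).
Proof. unfold Eset. norm. lia. Qed.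

Lemma part3 :
  (forall i, 1 <= i <= 3 * k -> setlt (Aset k i) (Bset k i)) /\
  (forall i, 1 <= i <= 3 * k - 1 -> setlt (Bset k i) (Aset k (i + 1))) /\
  setlt (Bset k (3 * k)) (Cset k (3 * k + 1)) /\
  (forall i, 3 * k + 1 <= i <= 6 * k -> setlt (Cset k i) (Dset k i)) /\
  (forall i, 3 * k + 1 <= i <= 6 * k -> setlt (Dset k i) (Cset k (i + 1))) /\
  setlt (Cset k (6 * k + 1)) (Eset k).
Proof.
  unfold setlt. repeat split.
  - eexists; apply A_w; lia.
  - eexists; apply B_w; lia.
  - intros x y Hx Hy. apply A_b in Hx; [|lia]. apply B_b in Hy; lia.
  - eexists; apply B_w; lia.
  - eexists; apply A_w; lia.
  - intros x y Hx Hy. apply B_b in Hx; [|lia]. apply A_b in Hy; lia.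
  - eexists; apply B_w; lia.
  - eexists; apply C_w; lia.
  - intros x y Hx Hy. apply B_b in Hx; [|lia]. apply C_b in Hy; lia.
  - eexists; apply C_w; lia.
  - eexists; apply D_w; lia.
  - intros x y Hx Hy. apply C_b in Hx; [|lia]. apply D_b in Hy; lia.
  - eexists; apply D_w; lia.
  - eexists; apply C_w; lia.
  - intros x y Hx Hy. apply D_b in Hx; [|lia]. apply C_b in Hy; lia.
  - eexists; apply C_w; lia.
  - eexists; apply E_w.
  - intros x y Hx Hy. apply C_b in Hx; [|lia]. apply E_b in Hy; lia.
Qed.
End S.

Definition nx k x := let '(i1,u1,p1) := scp k (x/(12*k+2)) ((x mod (12*k+2))/2) ((x mod (12*k+2)) mod 2) in
  i1*(12*k+2)+2*u1+p1.
Definition Ix k x := Ic k (x/(12*k+2)) ((x mod (12*k+2))/2) ((x mod (12*k+2)) mod 2).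

Lemma dec_rw k i u p x : p <= 1 -> 2*u+p < 12*k+2 -> x = i*(12*k+2)+2*u+p ->
  x/(12*k+2) = i /\ (x mod (12*k+2))/2 = u /\ (x mod (12*k+2)) mod 2 = p.
Proof.
  intros hp ht hx.
  assert (h1 : i = x/(12*k+2)) by (apply (Nat.div_unique _ _ _ (2*u+p)); lia).
  assert (h2 : 2*u+p = x mod (12*k+2)) by (apply (Nat.mod_unique _ _ i); lia).
  rewrite <- h1, <- h2. split; [auto|]. split; lia.
Qed.

Section S.
Variable k : nat.
Hypothesis hk : 1 <= k.

Lemma nx_eq i u p x : p <= 1 -> 2*u+p < 12*k+2 -> x = i*(12*k+2)+2*u+p ->
  nx k x = (let '(i1,u1,p1) := scp k i u p in i1*(12*k+2)+2*u1+p1) /\ Ix k x = Ic k i u p.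
Proof.
  intros hp ht hx. destruct (dec_rw k i u p x hp ht hx) as (h1 & h2 & h3).
  unfold nx, Ix. rewrite h1, h2, h3. auto.
Qed.

Lemma KX x : Lay k x -> Lay k (nx k x) /\ x < nx k x /\ (forall z, x < z -> z < nx k x -> ~ Lay k z) /\
  Ix k (nx k x) = Ix k x + 1.
Proof.
  intros (i & u & p & hp & ht & hx & hL).
  destruct (nx_eq i u p x hp ht hx) as [e1 e2]. rewrite e1, e2.
  destruct (scp k i u p) as [[i1 u1] p1] eqn:hs.
  destruct (scp_ok k hk i u p i1 u1 p1 hp ht hL hs) as (hp1 & ht1 & hL1 & hc).
  destruct (nx_eq i1 u1 p1 _ hp1 ht1 eq_refl) as [_ e3]. rewrite e3.
  repeat split.
  - exists i1, u1, p1. auto.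
  - destruct hc as [[-> hc]|(-> & -> & ->)]; lia.
  - intros z hz1 hz2 (iz & uz & pz & hpz & htz & hzx & hLz).
    assert (iz = i).
    { assert (b1 : i*(12*k+2) <= z) by lia.
      assert (b2 : z < (i+1)*(12*k+2)) by (destruct hc as [[-> hc]|(-> & -> & ->)]; lia).
      exact (layer_of k i z b1 b2 iz uz pz hpz htz hzx). }
    subst iz.
    apply (scp_gap k hk i u p i1 u1 p1 hp ht hL hs uz pz hpz); try lia.
    all: first [exact hLz | intros ->; lia].
  - apply (scp_Ic k hk i u p i1 u1 p1 hp ht hL hs).
Qed.

Lemma RX x : Lay k x -> (Ix k x) mod 3 = 1 ->
  x mod 3 <> (nx k x) mod 3 /\ (nx k x) mod 3 <> (nx k (nx k x)) mod 3 /\ x mod 3 <> (nx k (nx k x)) mod 3.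
Proof.
  intros (i & u & p & hp & ht & hx & hL) hI.
  destruct (nx_eq i u p x hp ht hx) as [e1 e2]. rewrite e2 in hI. rewrite e1.
  destruct (scp k i u p) as [[i1 u1] p1] eqn:hs.
  destruct (scp_ok k hk i u p i1 u1 p1 hp ht hL hs) as (hp1 & ht1 & hL1 & hc).
  destruct (nx_eq i1 u1 p1 _ hp1 ht1 eq_refl) as [e3 _]. rewrite e3.
  destruct (scp k i1 u1 p1) as [[i2 u2] p2] eqn:hs2.
  subst x. apply (scp_res k hk i u p i1 u1 p1 i2 u2 p2 hp ht hL hI hs hs2).
Qed.

Definition g n := Nat.iter n (nx k) 0.

Lemma g_S n : g (S n) = nx k (g n).
Proof. reflexivity. Qed.

Lemma g_prop n : Lay k (g n) /\ Ix k (g n) = n.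
Proof.
  induction n as [|n [IH1 IH2]].
  - assert (Lay k 0) by (exists 0, 0, 0; unfold LM; lia).
    split; auto. destruct (nx_eq 0 0 0 0 ltac:(lia) ltac:(lia) ltac:(lia)) as [_ e]. simpl g. rewrite e. reflexivity.
  - rewrite g_S. destruct (KX _ IH1) as (h1 & _ & _ & h4). split; auto. lia.
Qed.

Lemma g_lt n : g n < g (S n).
Proof. rewrite g_S. apply KX. apply g_prop. Qed.

Lemma g_mono i j : i < j -> g i < g j.
Proof.
  intros h. induction j as [|j IH]; [lia|].
  destruct (Nat.eq_dec i j) as [->|hne]; [apply g_lt|].
  pose proof (g_lt j). assert (g i < g j) by (apply IH; lia). lia.
Qed.

Lemma g_ge n : n <= g n.
Proof. induction n; [lia|]. pose proof (g_lt n). lia. Qed.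

Lemma g_surj n x : Lay k x -> x < g n -> exists m, g m = x.
Proof.
  revert x. induction n as [|n IH]; intros x hx hlt.
  - simpl in hlt. lia.
  - destruct (Nat.lt_total x (g n)) as [h|[h|h]].
    + apply IH; auto.
    + exists n; auto.
    + exfalso. rewrite g_S in hlt. destruct (KX _ (proj1 (g_prop n))) as (_ & _ & h3 & _).
      apply (h3 x h hlt hx).
Qed.

Lemma g_enum : is_enum (H8 k) g.
Proof.
  split.
  - apply g_mono.
  - intros x. split.
    + intro H. apply (g_surj (S x)). apply H8_Lay; auto. pose proof (g_ge (S x)). lia.
    + intros [i <-]. apply Lay_H8; auto. apply g_prop.
Qed.
End S.

Section S.
Variable k : nat.
Hypothesis hk : 1 <= k.

Lemma g123 : g k 1 = 12*k+2 /\ g k 2 = 12*k+2+2 /\ g k 3 = 12*k+2+(6*k+1).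
Proof.
  assert (e1 : g k 1 = 12*k+2).
  { rewrite g_S. simpl g. destruct (nx_eq k 0 0 0 0 ltac:(lia) ltac:(lia) ltac:(lia)) as [e _].
    rewrite e. unfold scp. simpl. lia. }
  assert (e2 : g k 2 = 12*k+2+2).
  { rewrite g_S, e1. destruct (nx_eq k 1 0 0 (12*k+2) ltac:(lia) ltac:(lia) ltac:(lia)) as [e _].
    rewrite e. assert (scp k 1 0 0 = (1,1,0)) as ->.
    { unfold scp. crush; first [reflexivity | exfalso; lia]. }
    lia. }
  assert (e3 : g k 3 = 12*k+2+(6*k+1)).
  { rewrite g_S, e2. destruct (nx_eq k 1 1 0 (12*k+2+2) ltac:(lia) ltac:(lia) ltac:(lia)) as [e _].
    rewrite e. assert (scp k 1 1 0 = (1,3*k,1)) as ->.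
    { unfold scp. crush; first [reflexivity | exfalso; lia]. }
    lia. }
  auto.
Qed.

Lemma H8_gen x : H8 k x <-> gen (fun y => exists j, 1 <= j <= 3 /\ y = g k j) x.
Proof.
  rewrite <- Gk_H8 by auto. unfold Gk. destruct g123 as (e1 & e2 & e3).
  assert (ea : aa k = 12*k+2) by reflexivity. rewrite ea, hdiv. split; apply gen_ext.
  - intros y [->|[->| ->]]; [exists 1|exists 2|exists 3]; split; lia.
  - intros y (j & hj & ->). assert (j = 1 \/ j = 2 \/ j = 3) as [->|[->| ->]] by lia; lia.
Qed.

Lemma ns : numerical_semigroup (H8 k).
Proof.
  split; [|split].
  - left. reflexivity.
  - intros x y hx hy. apply Gk_H8; auto. apply Gk_H8 in hx; auto. apply Gk_H8 in hy; auto.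
    apply gen_add; auto.
  - exists (seq 0 ((6*k+2)*(12*k+2))). intros x hx. apply in_seq.
    destruct (le_lt_dec ((6*k+2)*(12*k+2)) x); [|lia]. exfalso. apply hx.
    right; right; right; right. unfold Eset, ivinf. rewrite hdiv. unfold aa. lia.
Qed.

Lemma perm m c : c < 3 -> exists! j, (1 <= j <= 3) /\ g k (m * 3 + j) mod 3 = c.
Proof.
  intros hc.
  destruct (g_prop k hk (m*3+1)) as [hL hI].
  assert (hI' : Ix k (g k (m*3+1)) mod 3 = 1) by (rewrite hI; lia).
  destruct (RX k hk _ hL hI') as (d1 & d2 & d3).
  assert (e2 : g k (m*3+2) = nx k (g k (m*3+1))) by (replace (m*3+2) with (S (m*3+1)) by lia; apply g_S).
  assert (e3 : g k (m*3+3) = nx k (g k (m*3+2))) by (replace (m*3+3) with (S (m*3+2)) by lia; apply g_S).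
  rewrite <- e2 in d1, d2, d3. rewrite <- e3 in d2, d3.
  set (r1 := g k (m*3+1) mod 3) in *. set (r2 := g k (m*3+2) mod 3) in *. set (r3 := g k (m*3+3) mod 3) in *.
  assert (r1 < 3 /\ r2 < 3 /\ r3 < 3) by (subst r1 r2 r3; repeat split; apply Nat.mod_upper_bound; lia).
  assert (c = r1 \/ c = r2 \/ c = r3) as [hc1|[hc1|hc1]] by lia.
  - exists 1. split; [split; [lia|auto]|].
    intros j' [hj' hg]. assert (j' = 1 \/ j' = 2 \/ j' = 3) as [->|[->| ->]] by lia; [lia| |]; fold r2 r3 in hg; lia.
  - exists 2. split; [split; [lia|auto]|].
    intros j' [hj' hg]. assert (j' = 1 \/ j' = 2 \/ j' = 3) as [->|[->| ->]] by lia; [| lia |]; fold r1 r3 in hg; lia.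
  - exists 3. split; [split; [lia|auto]|].
    intros j' [hj' hg]. assert (j' = 1 \/ j' = 2 \/ j' = 3) as [->|[->| ->]] by lia; [| | lia]; fold r1 r2 in hg; lia.
Qed.

Lemma part4 : perm_num_semigroup 3 (H8 k).
Proof.
  split; [apply ns|]. exists (g k). split; [apply g_enum; auto|]. split.
  - apply H8_gen.
  - apply perm.
Qed.
End S.

Theorem lemma4p8 (k : nat) (hk : 1 <= k) :
  (* (1) *)
  (forall x, Gk k x <->
     exists q r s, r <= q /\ x = q * aa k + 2 * r + s * (aa k + ha k)) /\
  (* (2) *)
  (forall x, Gk k x <-> H8 k x) /\
  (* (3) *)
  (forall i, 1 <= i <= 3 * k -> setlt (Aset k i) (Bset k i)) /\
  (forall i, 1 <= i <= 3 * k - 1 -> setlt (Bset k i) (Aset k (i + 1))) /\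
  setlt (Bset k (3 * k)) (Cset k (3 * k + 1)) /\
  (forall i, 3 * k + 1 <= i <= 6 * k -> setlt (Cset k i) (Dset k i)) /\
  (forall i, 3 * k + 1 <= i <= 6 * k -> setlt (Dset k i) (Cset k (i + 1))) /\
  setlt (Cset k (6 * k + 1)) (Eset k) /\
  (* (4) *)
  perm_num_semigroup 3 (H8 k).
Proof.
  split; [intro x; apply Gk_Rep|].
  split; [intro x; apply Gk_H8; auto|].
  destruct (part3 k hk) as (h1 & h2 & h3 & h4 & h5 & h6).
  repeat (split; [assumption|]). apply part4; auto.
Qed.
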